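(* Let $S$ be a star-shaped subset of a topological real vector space $V$ and $p_S$ its gauge function. Then: (1a) $\mathrm{int}\big(p_S^{-1}([0,1))\big)=\mathrm{int}(S)=\mathrm{int}\big(p_S^{-1}([0,1])\big)$; (1b) $\overline{p_S^{-1}([0,1))}=\overline{S}=\overline{p_S^{-1}([0,1])}$; (2a) $p_S$ is lower semi-continuous $\iff$ $p_S^{-1}([0,1])$ is closed in $V$ $\iff$ $p_S^{-1}([0,1])=\overline{S}$; (2b) $p_S$ is upper semi-continuous $\iff$ $p_S^{-1}([0,1))$ is open in $V$ $\iff$ $p_S^{-1}([0,1))=\mathrm{int}(S)$; (2c) $p_S$ is continuous $\iff$ $p_S^{-1}(1)=\partial S$. Here interior, closure and boundary are taken in $V$, and semi-continuity/continuity refer to $p_S$ as a map into $[0,+\infty]$ with its usual order topology.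
   Context: Topological real vector spaces are not assumed Hausdorff. A subset $S$ is star-shaped (about the origin) if $tx\in S$ for all $x\in S$, $t\in[0,1]$. The gauge of $S$ is $p_S:V\to[0,+\infty]$, $p_S(x)=\inf\{\lambda\ge 0: x\in\lambda S\}$ (with $\inf\emptyset=+\infty$). *)

(* Defs.v *)
From HB Require Import structures.
From mathcomp Require Import all_boot all_order all_algebra.
From mathcomp Require Import all_classical all_reals all_analysis.
Set Implicit Arguments. Unset Strict Implicit. Unset Printing Implicit Defensive.
Import Order.TTheory GRing.Theory Num.Theory.
Local Open Scope classical_set_scope.
Local Open Scope ring_scope.

Section Gauge.
Context {R : realType} {V : topologicalLmodType R}.

Definition star_shaped (S : set V) : Prop :=
  forall x (t : R), S x -> 0 <= t <= 1 -> S (t *: x).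

Definition scale_set (l : R) (S : set V) : set V := (fun y => l *: y) @` S.

(** Gauge (Minkowski functional) p_S : V -> [0, +oo], inf of empty = +oo. *)
Definition gauge (S : set V) (x : V) : \bar R :=
  ereal_inf [set l%:E | l in [set l : R | 0 <= l /\ scale_set l S x]].

Definition boundary (A : set V) : set V := closure A `\` interior A.

(** Upper semicontinuity of an extended-real-valued map (dual of the
    library's [lower_semicontinuous]). *)
Definition upper_semicontinuous (f : V -> \bar R) : Prop :=
  forall x (a : R), (f x < a%:E)%E ->
    exists2 U, nbhs x U & forall y, U y -> (f y < a%:E)%E.

End Gauge.

(* Main.v *)
Require Import Defs.
From HB Require Import structures.
From mathcomp Require Import all_boot all_order all_algebra.
From mathcomp Require Import all_classical all_reals all_analysis.
From mathcomp Require Import lra.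
Import Order.TTheory GRing.Theory Num.Theory.
Local Open Scope classical_set_scope.
Local Open Scope ring_scope.

Section G.
Context {R : realType} {V : topologicalLmodType R} (S : set V).
Local Notation p := (gauge S).

Lemma gauge_ge0 x : (0 <= p x)%E.
Proof.
apply: le_ereal_inf_tmp => _ [l [l0 _] <-]; by rewrite lee_fin.
Qed.

Lemma gauge_le x l : 0 <= l -> scale_set l S x -> (p x <= l%:E)%E.
Proof. by move=> l0 hl; apply: ereal_inf_lbound; exists l. Qed.

Lemma gauge_ltP x a : (p x < a%:E)%E -> exists l, [/\ 0 <= l, l < a & scale_set l S x].
Proof.
move/ereal_inf_lt => [_ [l [l0 hl] <-]]; rewrite lte_fin => la.
by exists l.
Qed.

Lemma scale_setZ l c x : scale_set l S x -> scale_set (c * l) S (c *: x).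
Proof. by move=> [s Ss <-]; exists s => //; rewrite scalerA. Qed.

Lemma gauge_lt_scale x a c : (p x < a%:E)%E -> 0 < c -> (p (c *: x) < (c * a)%:E)%E.
Proof.
move=> /gauge_ltP [l [l0 la hl]] c0.
have := @gauge_le (c *: x) _ (mulr_ge0 (ltW c0) l0) (@scale_setZ l c x hl).
move=> H; apply: le_lt_trans H _.
by rewrite lte_fin ltr_pM2l.
Qed.

Lemma ereal_dense_gt (y : \bar R) a : (a%:E < y)%E -> exists b, a < b /\ (b%:E < y)%E.
Proof.
case: y => [r||] //.
  rewrite lte_fin => ar; exists ((a + r) / 2); rewrite lte_fin.
  split; lra.
move=> _; exists (a + 1); split; [lra | exact: ltry].
Qed.

Lemma ereal_dense_lt (y : \bar R) a : (y < a%:E)%E -> exists b, b < a /\ (y < b%:E)%E.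
Proof.
case: y => [r||] //.
  rewrite lte_fin => ar; exists ((a + r) / 2); rewrite lte_fin.
  split; lra.
move=> _; exists (a - 1); split; [lra | exact: ltNyr].
Qed.

Lemma gauge_le_scale x a c : (p x <= a%:E)%E -> 0 < c -> (p (c *: x) <= (c * a)%:E)%E.
Proof.
move=> pa c0; rewrite leNgt; apply/negP => /ereal_dense_gt [b [cab bp]].
have : (p x < (b / c)%:E)%E.
  by apply: (le_lt_trans pa); rewrite lte_fin ltr_pdivlMr // mulrC.
move=> /(gauge_lt_scale) /(_ c0); rewrite mulrC divfK ?gt_eqF //.
by move=> /(lt_trans bp); rewrite ltxx.
Qed.


Lemma K1 (x : V) : continuous (fun t : R^o => t *: x).
Proof.
move=> t.
apply: (@continuous_comp _ _ _ (fun t : R^o => (t, x)) (fun z : R^o * V => z.1 *: z.2)).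
  by apply: (@cvg_pair _ _ _ _ (nbhs t)); [exact: cvg_id | exact: cvg_cst].
exact: (@scale_continuous R V).
Qed.

Lemma K2 (c : R) : continuous (fun y : V => c *: y).
Proof.
move=> t.
apply: (@continuous_comp _ _ _ (fun y : V => (c : R^o, y)) (fun z : R^o * V => z.1 *: z.2)).
  by apply: (@cvg_pair _ _ _ _ (nbhs (c : R^o))); [exact: cvg_cst | exact: cvg_id].
exact: (@scale_continuous R V).
Qed.

Lemma nbhs_R_ball (r : R^o) (B : set R^o) : nbhs r B -> exists2 e, 0 < e & forall s, `|r - s| < e -> B s.
Proof.
move=> /nbhs_ballP [e e0 H]; exists e => // s rs; apply: H.

Qed.

Lemma K1n x (B : set V) : nbhs x B -> nbhs (1 : R^o) (fun t => B (t *: x)).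
Proof. move=> hB; apply: (K1 x 1); rewrite /= scale1r; exact: hB. Qed.

Lemma K2n x (c : R) (B : set V) : nbhs (c *: x) B -> nbhs x (fun y => B (c *: y)).
Proof. move=> hB; exact: (K2 c x). Qed.

Hypothesis star : star_shaped S.

Lemma gauge_lt1_S x : (p x < 1%:E)%E -> S x.
Proof.
move=> /gauge_ltP [l [l0 l1 [s Ss <-]]]; apply: star => //.
by rewrite l0 ltW.
Qed.

Lemma S_gauge_le1 x : S x -> (p x <= 1%:E)%E.
Proof. by move=> Sx; apply: gauge_le => //; exists x => //; rewrite scale1r. Qed.

Lemma gauge_lt1_scale x t : (p x <= 1%:E)%E -> 0 <= t < 1 -> (p (t *: x) < 1%:E)%E.
Proof.
move=> px /andP [t0 t1].
have px2 : (p x < 2%:E)%E by apply: le_lt_trans px _; rewrite lte_fin; lra.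
have [->|tn0] := eqVneq t 0.
  have [l [l0 _ [s Ss _]]] := gauge_ltP _ _ px2.
  apply: le_lt_trans; first apply: (@gauge_le _ 0) => //.
    by exists s => //; rewrite !scale0r.
  by rewrite lte_fin.
have tp : 0 < t by rewrite lt_neqAle eq_sym tn0 t0.
have pxb : (p x < ((1 + t^-1) / 2)%:E)%E.
  apply: le_lt_trans px _; rewrite lte_fin.
  have : 1 < t^-1 by rewrite invf_gt1.
  lra.
have := gauge_lt_scale _ _ _ pxb tp; move=> H; apply: lt_le_trans H _.
rewrite lee_fin mulrA mulrDr mulr1 mulfV //; lra.
Qed.

Lemma gauge_gt1_scale x t : (p (t *: x) <= 1%:E)%E -> 1 < t -> (p x < 1%:E)%E.
Proof.
move=> px t1.
have tp : 0 < t by lra.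
have pxb : (p (t *: x) < ((1 + t) / 2)%:E)%E.
  by apply: le_lt_trans px _; rewrite lte_fin; lra.
have := gauge_lt_scale _ _ t^-1 pxb (ltac:(by rewrite invr_gt0)).
rewrite scalerA mulVf ?gt_eqF // scale1r => H; apply: lt_le_trans H _.
rewrite lee_fin mulrC ler_pdivrMr // mul1r; lra.
Qed.

Lemma intP1_lt1 x : nbhs x [set y | (p y <= 1%:E)%E] -> (p x < 1%:E)%E.
Proof.
move=> hx.
have := K1n _ _ hx; move=> /nbhs_R_ball [e e0 H].
apply: (@gauge_gt1_scale x (1 + e / 2)); last lra.
by apply: H; rewrite opprD addrA subrr sub0r normrN ger0_norm; lra.
Qed.

Lemma P1_clP0 x : (p x <= 1%:E)%E -> closure [set y | (p y < 1%:E)%E] x.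
Proof.
move=> px B hB.
have := K1n _ _ hB; move=> /nbhs_R_ball [e e0 H].
pose e' := Num.min e 1.
have e'e : e' <= e by rewrite ge_min lexx.
have e'1 : e' <= 1 by rewrite ge_min lexx orbT.
have e'0 : 0 < e' by rewrite lt_min e0 ltr01.
exists ((1 - e' / 2) *: x); split.
  by apply: gauge_lt1_scale => //; apply/andP; split; lra.
by apply: H; rewrite opprB addrC subrK ger0_norm; lra.
Qed.


Let P0s := [set y | (p y < 1%:E)%E].
Let P1s := [set y | (p y <= 1%:E)%E].

Lemma P0_S : P0s `<=` S. Proof. exact: gauge_lt1_S. Qed.
Lemma S_P1 : S `<=` P1s. Proof. exact: S_gauge_le1. Qed.

Lemma int_P1_P0 : interior P1s `<=` interior P0s.
Proof.
move=> x hx; have := nbhs_interior hx; apply: filterS => y /= hy.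
exact: intP1_lt1.
Qed.

Lemma cl_P1_P0 : closure P1s `<=` closure P0s.
Proof.
have -> : closure P0s = closure (closure P0s) by apply/closure_id/closed_closure.
apply: closureS => x; exact: P1_clP0.
Qed.

Lemma lsc_closed : lower_semicontinuous p <-> closed P1s.
Proof.
split.
  move=> lsc x clx; rewrite /P1s /=; rewrite leNgt; apply/negP => hx.
  have [U hU HU] := lsc x 1 hx.
  have [y [Py Uy]] := clx U hU.
  by move: (HU y Uy); rewrite ltNge Py.
move=> cl x a ax.
have [a0|a0] := ltP a 0.
  exists setT; first exact: filterT.
  move=> y _; apply: lt_le_trans (gauge_ge0 y); by rewrite lte_fin.
have [b [ab bx]] := ereal_dense_gt _ _ ax.
have b0 : 0 < b by lra.
exists (fun y => (~` P1s) (b^-1 *: y)).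
  apply: K2n; apply: open_nbhs_nbhs; split; first exact: closed_openC.
  move=> /= H; have := gauge_le_scale _ _ b H b0.
  rewrite scalerA mulfV ?gt_eqF // scale1r mulr1 => H2.
  by move: (lt_le_trans bx H2); rewrite ltxx.
move=> y /= Hy; rewrite ltNge; apply/negP => H; apply: Hy.
have := gauge_le_scale _ _ b^-1 H (ltac:(by rewrite invr_gt0)).
move=> H2; apply: le_trans H2 _; rewrite lee_fin mulrC ler_pdivrMr // mul1r; lra.
Qed.

Lemma usc_open : upper_semicontinuous p <-> open P0s.
Proof.
split.
  move=> usc; rewrite openE => x hx.
  have [U hU HU] := usc x 1 hx.
  by apply: filterS hU.
move=> op x a ax.
have a0 : 0 < a.
  have := le_lt_trans (gauge_ge0 x) ax; by rewrite lte_fin.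
exists (fun y => P0s (a^-1 *: y)).
  apply: K2n; apply: open_nbhs_nbhs; split => //.
  rewrite /P0s /=; have := gauge_lt_scale _ _ a^-1 ax (ltac:(by rewrite invr_gt0)).
  by rewrite mulVf ?gt_eqF.
move=> y /= Hy; have := gauge_lt_scale _ _ a Hy a0.
by rewrite scalerA mulfV ?gt_eqF // scale1r mulr1.
Qed.

Lemma cont_lsc_usc : continuous p <-> lower_semicontinuous p /\ upper_semicontinuous p.
Proof.
split.
  move=> c; split.
    move=> x a ax; exists (p @^-1` [set y | (a%:E < y)%E]) => //.
    apply: c; apply: open_nbhs_nbhs; split => //; exact: open_ereal_gt_ereal.
  move=> x a ax; exists (p @^-1` [set y | (y < a%:E)%E]) => //.
  apply: c; apply: open_nbhs_nbhs; split => //; exact: open_ereal_lt_ereal.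
move=> [lsc usc] x B.
case Ex: (p x) => [r||].
- move=> /nbhs_EFin /nbhs_R_ball [e e0 H].
  have [U1 hU1 HU1] := lsc x (r - e) (ltac:(rewrite Ex lte_fin; lra)).
  have [U2 hU2 HU2] := usc x (r + e) (ltac:(rewrite Ex lte_fin; lra)).
  apply: filterS (filterI hU1 hU2) => y [/HU1 h1 /HU2 h2] /=.
  move: h1 h2; case: (p y) => [s||] //; rewrite !lte_fin => h1 h2.
  apply: H; rewrite ltr_norml; apply/andP; split; lra.
- move=> [M [Mr HM]].
  have [U hU HU] := lsc x M (ltac:(by rewrite Ex ltry)).
  by apply: filterS hU => y /HU /HM.
- by have := gauge_ge0 x; rewrite Ex.
Qed.

End G.

Theorem mainTheorem14 (R : realType) (V : topologicalLmodType R) (S : set V) :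
  star_shaped S ->
  let P0 := gauge S @^-1` (`[(0%:E)%E, (1%:E)%E[) in
  let P1 := gauge S @^-1` (`[(0%:E)%E, (1%:E)%E]) in
  (* (1a) *)
  (interior P0 = interior S /\ interior S = interior P1) /\
  (* (1b) *)
  (closure P0 = closure S /\ closure S = closure P1) /\
  (* (2a) *)
  ((lower_semicontinuous (gauge S) <-> closed P1) /\
   (closed P1 <-> P1 = closure S)) /\
  (* (2b) *)
  ((upper_semicontinuous (gauge S) <-> open P0) /\
   (open P0 <-> P0 = interior S)) /\
  (* (2c) *)
  (continuous (gauge S) <-> gauge S @^-1` [set y | y = (1%:E)%E] = boundary S).
Proof.
move=> star P0 P1.
have -> : P0 = [set y | (gauge S y < 1%:E)%E].
  by apply/seteqP; split => y; rewrite /P0 /= in_itv /= gauge_ge0.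
have -> : P1 = [set y | (gauge S y <= 1%:E)%E].
  by apply/seteqP; split => y; rewrite /P1 /= in_itv /= gauge_ge0.
have P0S := P0_S S star; have SP1 := S_P1 S.
have IP := int_P1_P0 S; have CP := cl_P1_P0 S.
have hI0 : interior [set y | (gauge S y < 1%:E)%E] = interior S.
  apply/seteqP; split; first exact: interiorS.
  by move=> x /(interiorS SP1) /IP.
have hI1 : interior S = interior [set y | (gauge S y <= 1%:E)%E].
  apply/seteqP; split; first exact: interiorS.
  by move=> x /IP /(interiorS P0S).
have hC0 : closure [set y | (gauge S y < 1%:E)%E] = closure S.
  apply/seteqP; split; first exact: closureS.
  by move=> x /(closureS SP1) /CP.
have hC1 : closure S = closure [set y | (gauge S y <= 1%:E)%E].
  apply/seteqP; split; first exact: closureS.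
  by move=> x /CP /(closureS P0S).
have LC := lsc_closed S; have UO := usc_open S.
have CLS : closed [set y | (gauge S y <= 1%:E)%E] <-> [set y | (gauge S y <= 1%:E)%E] = closure S.
  split; last by move=> ->; exact: closed_closure.
  by move=> cl; rewrite hC1; exact/closure_id.
have OPI : open [set y | (gauge S y < 1%:E)%E] <-> [set y | (gauge S y < 1%:E)%E] = interior S.
  split; last by move=> ->; exact: open_interior.
  by move=> op; rewrite -hI0; exact/esym/interior_id.
have key : gauge S @^-1` [set y | y = 1%:E] =
    [set y | (gauge S y <= 1%:E)%E] `\` [set y | (gauge S y < 1%:E)%E].
  apply/seteqP; split => y /=.
    by move=> ->; rewrite lexx ltxx.
  by move=> [h1 /negP h2]; apply/eqP; rewrite eq_le h1 leNgt h2.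
split; first by [].
split; first by [].
split; first by split.
split; first by split.
rewrite key /boundary; split.
  move=> /(cont_lsc_usc S) [/LC /CLS -> /UO /OPI ->] //.
move=> h; apply/(cont_lsc_usc S); split; [apply/LC/CLS | apply/UO/OPI].
  apply/seteqP; split.
    by move=> x /subset_closure; rewrite hC1.
  move=> x clx; have [iS|niS] := pselect (interior S x).
    by move: iS; rewrite -hI0 => /interior_subset /= /ltW.
  by have : (closure S `\` interior S) x by []; rewrite -h => -[].
apply/seteqP; split; last first.
  by rewrite -hI0; exact: interior_subset.
move=> x Px; apply: contrapT => niS.
have : (closure S `\` interior S) x by split => //; apply: subset_closure; exact: P0S.
by rewrite -h => -[_].
Qed.
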